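(* Let $F$ be a field, $V$ a nonzero vector space over $F$, $\Gamma$ a nonempty set and $\varphi:\Gamma\to\Gamma$ a map. Let $\sigma_\varphi:V^\Gamma\to V^\Gamma$, $(x_\alpha)_{\alpha\in\Gamma}\mapsto(x_{\varphi(\alpha)})_{\alpha\in\Gamma}$. Then \[{\rm Eigen}(\sigma_\varphi,V^\Gamma)=\begin{cases} \{r\in F\setminus\{0\}: \exists\theta\in P(\varphi)\ \ o(r)\mid per(\theta)\}, & W(\varphi)=\varnothing,\ \Gamma=\varphi(\Gamma),\\ \{r\in F\setminus\{0\}: \exists\theta\in P(\varphi)\ \ o(r)\mid per(\theta)\}\cup\{0\}, & W(\varphi)=\varnothing,\ \Gamma\neq\varphi(\Gamma),\\ F\setminus\{0\}, & W(\varphi)\neq\varnothing,\ \Gamma=\varphi(\Gamma),\\ F, & W(\varphi)\neq\varnothing,\ \Gamma\neq\varphi(\Gamma), \end{cases}\] where for $r\in F\setminus\{0\}$, $o(r)$ is the order of $r$ in the multiplicative group $F\setminus\{0\}$ (the condition $o(r)\mid per(\theta)$ meaning $r$ has finite order dividing $per(\theta)$).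
   Context: For a linear map $T:W\to W$ on an $F$-vector space $W$, ${\rm Eigen}(T,W)$ is the set of all $r\in F$ such that $T(x)=rx$ for some nonzero $x\in W$. A point $a\in\Gamma$ is wandering if the sequence $(\varphi^n(a))_{n\geq1}$ is one-to-one; $W(\varphi)$ is the set of wandering points. $a$ is periodic if $\varphi^n(a)=a$ for some $n\geq1$; $P(\varphi)$ is the set of periodic points, and for $\alpha\in P(\varphi)$, $per(\alpha)=\min\{n\geq1:\varphi^n(\alpha)=\alpha\}$. *)

(* Defs.v *)
From HB Require Import structures.
From mathcomp Require Import all_boot all_order all_algebra.
Set Implicit Arguments. Unset Strict Implicit. Unset Printing Implicit Defensive.
Import GRing.Theory.
Local Open Scope ring_scope.

Definition Eigen (F : fieldType) (V : lmodType F) (G : Type)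
  (T : (G -> V) -> (G -> V)) (r : F) : Prop :=
  exists x : G -> V, x <> (fun _ => 0) /\ T x = (fun a => r *: x a).

Definition sigma (V : Type) (G : Type) (phi : G -> G) (x : G -> V) : G -> V :=
  fun a => x (phi a).

Definition wandering (G : Type) (phi : G -> G) (a : G) : Prop :=
  forall m n : nat, (1 <= m)%N -> (1 <= n)%N ->
    iter m phi a = iter n phi a -> m = n.

Definition periodic (G : Type) (phi : G -> G) (a : G) : Prop :=
  exists n : nat, (1 <= n)%N /\ iter n phi a = a.

Definition is_per (G : Type) (phi : G -> G) (a : G) (p : nat) : Prop :=
  (1 <= p)%N /\ iter p phi a = a /\
  forall n : nat, (1 <= n)%N -> iter n phi a = a -> (p <= n)%N.

Definition is_order (F : fieldType) (r : F) (k : nat) : Prop :=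
  (1 <= k)%N /\ r ^+ k = 1 /\
  forall j : nat, (1 <= j)%N -> r ^+ j = 1 -> (k <= j)%N.

Definition per_cond (F : fieldType) (G : Type) (phi : G -> G) (r : F) : Prop :=
  r != 0 /\ exists theta : G, periodic phi theta /\
    exists k p : nat, is_order r k /\ is_per phi theta p /\ (k %| p)%N.

Definition no_wandering (G : Type) (phi : G -> G) : Prop :=
  forall a : G, ~ wandering phi a.

Definition onto (G : Type) (phi : G -> G) : Prop :=
  forall b : G, exists a : G, phi a = b.

(* Main.v *)
Require Import Defs.
From HB Require Import structures.
From mathcomp Require Import all_boot all_order all_algebra.
From mathcomp Require Import ring zify.
From Stdlib Require Import ClassicalEpsilon Classical FunctionalExtensionality.
Import GRing.Theory.
Local Open Scope ring_scope.

Lemma construct (F : fieldType) (V : lmodType F) (G : Type) (phi : G -> G)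
  (th : G) (r : F) (v : V) : r != 0 -> v != 0 ->
  (forall i i', iter i phi th = iter i' phi th -> r ^+ i = r ^+ i') ->
  Eigen (@sigma V G phi) r.
Proof.
move=> r0 v0 H.
have key : forall b n j n' j', iter n phi b = iter j phi th ->
    iter n' phi b = iter j' phi th -> r ^+ j / r ^+ n = r ^+ j' / r ^+ n'.
  move=> b.
  suff W : forall n j n' j', (n <= n')%N -> iter n phi b = iter j phi th ->
    iter n' phi b = iter j' phi th -> r ^+ j / r ^+ n = r ^+ j' / r ^+ n'.
    move=> n j n' j' e1 e2; case: (leqP n n') => hn; first exact: W.
    by symmetry; apply: W => //; apply: ltnW.
  move=> n j n' j' hn e1 e2.
  move: e2; rewrite -(subnK hn); move: (n' - n)%N => d e2.
  have e3 : iter (d + j) phi th = iter j' phi th.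
    by rewrite iterD -e1 -iterD.
  have := H _ _ e3; rewrite exprD => <-.
  rewrite exprD.
  have := expf_neq0 d r0; have := expf_neq0 n r0.
  move=> h1 h2; field; apply/andP; split => //.
pose P b := exists nj : nat * nat, iter nj.1 phi b = iter nj.2 phi th.
pose x b : V := match excluded_middle_informative (P b) with
  | left Hb => (r ^+ (sval (constructive_indefinite_description _ Hb)).2 /
                r ^+ (sval (constructive_indefinite_description _ Hb)).1) *: v
  | right _ => 0 end.
have xval : forall b n j, iter n phi b = iter j phi th -> x b = (r ^+ j / r ^+ n) *: v.
  move=> b n j e; rewrite /x; case: excluded_middle_informative => Hb; last first.
    by exfalso; apply: Hb; exists (n, j).
  case: constructive_indefinite_description => [[n0 j0] e0] /=.
  by rewrite (key _ _ _ _ _ e0 e).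
have xnot : forall b, ~ P b -> x b = 0.
  by move=> b Hb; rewrite /x; case: excluded_middle_informative.
exists x; split.
  move=> e; have := xval th 0%N 0%N erefl.
  rewrite e expr0 divr1 scale1r => e'.
  by move/eqP: v0; apply; rewrite -e'.
apply: functional_extensionality => b; rewrite /sigma.
case: (classic (P b)) => Hb.
  case: Hb => [[n j] /= e].
  have e' : iter n phi (phi b) = iter j.+1 phi th by rewrite -iterSr iterS e.
  rewrite (xval _ _ _ e) (xval _ _ _ e') scalerA exprS.
  by rewrite mulrA.
rewrite (xnot _ Hb) scaler0 xnot // => -[[n j] /= e].
by apply: Hb; exists (n.+1, j); rewrite -e -iterSr.
Qed.

Lemma minP (Q : nat -> Prop) n : (1 <= n)%N -> Q n ->
  exists p, (1 <= p)%N /\ Q p /\ forall m, (1 <= m)%N -> Q m -> (p <= m)%N.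
Proof.
move=> n1 Qn.
pose b m := (0 < m)%N && (if excluded_middle_informative (Q m) then true else false).
have ex : exists m, b m by exists n; rewrite /b n1; case: excluded_middle_informative.
case: (ex_minnP ex) => p /andP [p1 Qp] pm; exists p; split => //; split.
  by move: Qp; case: excluded_middle_informative.
move=> m m1 Qm; apply: pm; rewrite /b m1; by case: excluded_middle_informative.
Qed.

Lemma nonzero_ex (G : Type) (V : zmodType) (x : G -> V) :
  x <> (fun _ => 0) -> exists b, x b != 0.
Proof.
move=> h; apply: NNPP => h2; apply: h; apply: functional_extensionality => b.
apply/eqP; apply: NNPP => h3; apply: h2; by exists b; apply/negP.
Qed.

Lemma iter_eig (F : fieldType) (V : lmodType F) (G : Type) (phi : G -> G) r x :
  @sigma V G phi x = (fun a => r *: x a) ->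
  forall i b, x (iter i phi b) = r ^+ i *: x b.
Proof.
move=> e; elim=> [|i IH] b; first by rewrite expr0 scale1r.
have := congr1 (fun f => f (iter i phi b)) e; rewrite /sigma /= => ->.
by rewrite IH scalerA exprS.
Qed.

Lemma eigen0 (F : fieldType) (V : lmodType F) (G : Type) (phi : G -> G) :
  (exists v : V, v != 0) -> (Eigen (@sigma V G phi) 0 <-> ~ onto phi).
Proof.
move=> [v v0]; split.
  move=> [x [xn e]] on; case: (@nonzero_ex _ _ _ xn) => b; case: (on b) => a <-.
  have := congr1 (fun f => f a) e; rewrite /sigma /= scale0r => ->.
  by rewrite eqxx.
move=> non; have [b hb] : exists b, forall a, phi a <> b.
  by apply: NNPP => h; apply: non => b; apply: NNPP => h2; apply: h; exists b => a ea; apply: h2; exists a.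
exists (fun c => if excluded_middle_informative (c = b) then v else 0); split.
  move=> e; have := congr1 (fun f => f b) e => /=.
  case: excluded_middle_informative => // ? ev; move/eqP: v0; apply; exact: ev.
apply: functional_extensionality => a; rewrite /sigma scale0r.
by case: (excluded_middle_informative (phi a = b)) => // /hb [].
Qed.

Lemma iter_mul (G : Type) (phi : G -> G) th p q :
  iter p phi th = th -> iter (q * p) phi th = th.
Proof. by move=> e; elim: q => [|q IH] //; rewrite mulSn iterD IH e. Qed.

Lemma per_inj (F : fieldType) (G : Type) (phi : G -> G) (r : F) th k p :
  is_order r k -> is_per phi th p -> (k %| p)%N ->
  forall i i', iter i phi th = iter i' phi th -> r ^+ i = r ^+ i'.
Proof.
move=> [k1 [rk km]] [p1 [ep pm]] kp.
have rp : r ^+ p = 1 by case/dvdnP: kp => q ->; rewrite mulnC exprM rk expr1n.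
have red : forall i, iter i phi th = iter (i %% p) phi th.
  move=> i; have {1}->: i = (i %/ p * p + i %% p)%N by rewrite -divn_eq.
  by rewrite addnC iterD iter_mul.
have uniq : forall a c, (a < p)%N -> (c < p)%N -> iter a phi th = iter c phi th -> a = c.
  suff W : forall a c, (a < c)%N -> (c < p)%N -> iter a phi th = iter c phi th -> False.
    move=> a c ap cp e; case: (ltngtP a c) => // h; first by case: (W _ _ h cp e).
    by case: (W _ _ h ap (esym e)).
  move=> a c ac cp e.
  have e2 : iter ((p - c) + a) phi th = th by rewrite iterD e -iterD subnK // ltnW.
  have := pm _ _ e2; lia.
move=> i i' e; rewrite -(expr_mod i rp) -(expr_mod i' rp); congr (_ ^+ _).
by apply: uniq; rewrite ?ltn_pmod //; rewrite -!red.
Qed.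

Lemma necessity (F : fieldType) (V : lmodType F) (G : Type) (phi : G -> G) (r : F) :
  no_wandering phi -> r != 0 -> Eigen (@sigma V G phi) r -> per_cond phi r.
Proof.
move=> nw r0 [x [xn e]]; split => //.
case: (@nonzero_ex _ _ _ xn) => b xb.
have ie := @iter_eig _ _ _ _ _ _ e.
have [m [n [m1 [n1 [emn mn]]]]] : exists m n, (1 <= m)%N /\ (1 <= n)%N /\
    iter m phi b = iter n phi b /\ (m < n)%N.
  apply: NNPP => h; apply: (nw b) => m n m1 n1 emn.
  case: (ltngtP m n) => // h2; exfalso; apply: h.
    by exists m, n.
  by exists n, m.
set th := iter m phi b.
have eth : iter (n - m) phi th = th.
  rewrite /th -iterD subnK; first by rewrite emn. exact: ltnW.
have d1 : (1 <= n - m)%N by rewrite subn_gt0.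
have [p [p1 [ep pm]]] := @minP (fun q => iter q phi th = th) (n - m)%N d1 eth.
have xth : x th != 0 by rewrite /th ie scaler_eq0 negb_or expf_neq0.
have rp : r ^+ p = 1.
  have := ie p th; rewrite ep => /eqP; rewrite -subr_eq0 -{1}(scale1r (x th)) -scalerBl.
  by rewrite scaler_eq0 (negbTE xth) orbF subr_eq0 => /eqP <-.
have [k [k1 [rk km]]] := @minP (fun j => r ^+ j = 1) p p1 rp.
exists th; split; first by exists p.
exists k, p; split; first by [].
split; first by [].
case: (posnP (p %% k)%N) => h; first by apply/eqP.
have hk : r ^+ (p %% k)%N = 1 by rewrite expr_mod.
move: (km _ h hk).
by rewrite leqNgt ltn_pmod.
Qed.

Lemma wand_eig (F : fieldType) (V : lmodType F) (G : Type) (phi : G -> G) (r : F) :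
  (exists v : V, v != 0) -> ~ no_wandering phi -> r != 0 -> Eigen (@sigma V G phi) r.
Proof.
move=> [v v0] wn r0.
have [a wa] : exists a, wandering phi a.
  by apply: NNPP => h; apply: wn => a wa; apply: h; exists a.
apply: (@construct F V G phi (phi a) r v r0 v0) => i i' e.
suff -> : i = i' by [].
have : i.+1 = i'.+1 by apply: wa => //; rewrite !iterSr.
by case.
Qed.

Lemma per_eig (F : fieldType) (V : lmodType F) (G : Type) (phi : G -> G) (r : F) :
  (exists v : V, v != 0) -> per_cond phi r -> Eigen (@sigma V G phi) r.
Proof.
move=> [v v0] [r0 [th [_ [k [p [ko [pp kp]]]]]]].
exact: (@construct F V G phi th r v r0 v0 (@per_inj _ _ _ _ _ _ _ ko pp kp)).
Qed.

Theorem corollary2p11 (F : fieldType) (V : lmodType F) (G : Type) (g0 : G)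
  (phi : G -> G) (hV : exists v : V, v != 0) :
  (no_wandering phi -> onto phi ->
     forall r : F, Eigen (@sigma V G phi) r <-> per_cond phi r) /\
  (no_wandering phi -> ~ onto phi ->
     forall r : F, Eigen (@sigma V G phi) r <-> (per_cond phi r \/ r = 0)) /\
  (~ no_wandering phi -> onto phi ->
     forall r : F, Eigen (@sigma V G phi) r <-> r != 0) /\
  (~ no_wandering phi -> ~ onto phi ->
     forall r : F, Eigen (@sigma V G phi) r <-> True).
Proof.
have E0 := @eigen0 F V G phi hV.
split; [|split; [|split]].
- move=> nw on r; split; last exact: per_eig.
  move=> ei; apply: (@necessity F V) => //; apply/negP => /eqP r0; subst r.
  by case/E0: ei.
- move=> nw non r; split.
    move=> ei; case: (eqVneq r 0) => r0; first by right.
    by left; apply: (@necessity F V).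
  case; first exact: per_eig.
  by move=> ->; apply/E0.
- move=> wn on r; split; last exact: wand_eig.
  move=> ei; apply/negP => /eqP r0; subst r; by case/E0: ei.
- move=> wn non r; split => // _.
  case: (eqVneq r 0) => r0; first by subst r; apply/E0.
  exact: wand_eig.
Qed.
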